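(* Let $n\geq 1$ and let $c_1,c_2$ be two $n$-configurations. Let $G_1,G_2$ be groups such that $c_1$ is realisable in $G_1$ and $c_2$ is realisable in $G_2$. Then the join $c_1\wedge c_2$ is realisable in $G_1\times G_2$.
   Context: Write $[n]=\{1,\dots,n\}$. An $n$-configuration is a map $c\colon \mathcal{P}([n])\setminus\{\emptyset\}\to\{0,1\}$. An $n$-configuration $c$ is realisable in a group $G$ if there exist subgroups $H_1,\dots,H_n\leq G$ such that for every non-empty subset $I\subseteq[n]$, the subgroup $\bigcap_{i\in I}H_i$ is finitely generated if and only if $c(I)=0$. The join of two $n$-configurations $c_1,c_2$ is the $n$-configuration $c_1\wedge c_2$ defined by $(c_1\wedge c_2)(I)=0$ if $c_1(I)=0$ and $c_2(I)=0$, and $(c_1\wedge c_2)(I)=1$ otherwise. *)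

(* Defs.v *)
From mathcomp Require Import all_boot.
From Stdlib Require Import List.
Set Implicit Arguments. Unset Strict Implicit. Unset Printing Implicit Defensive.

Record group := Group {
  carrier :> Type;
  gmul : carrier -> carrier -> carrier;
  ginv : carrier -> carrier;
  gone : carrier;
  gmulA : forall x y z, gmul x (gmul y z) = gmul (gmul x y) z;
  gmul1l : forall x, gmul gone x = x;
  gmul1r : forall x, gmul x gone = x;
  gmulVl : forall x, gmul (ginv x) x = gone;
  gmulVr : forall x, gmul x (ginv x) = gone
}.

Definition is_subgroup (G : group) (H : G -> Prop) : Prop :=
  H (gone G) /\ (forall x y, H x -> H y -> H (gmul x y)) /\
  (forall x, H x -> H (ginv x)).

Inductive generated (G : group) (S : list G) : G -> Prop :=
  | gen_in : forall x, List.In x S -> generated S x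
  | gen_one : generated S (gone G)
  | gen_mul : forall x y, generated S x -> generated S y -> generated S (gmul x y)
  | gen_inv : forall x, generated S x -> generated S (ginv x).

Definition fin_gen (G : group) (H : G -> Prop) : Prop :=
  exists S : list G, forall x, H x <-> generated S x.

(* An n-configuration: a map from subsets of [n] = 'I_n to {0,1}, encoded
   as bool (false = 0, true = 1); its value on the empty set is irrelevant. *)
Definition configuration (n : nat) := {set 'I_n} -> bool.

Definition realisable (n : nat) (c : configuration n) (G : group) : Prop :=
  exists H : 'I_n -> G -> Prop,
    (forall i, is_subgroup (H i)) /\
    forall I : {set 'I_n}, I != set0 ->
      (fin_gen (fun x => forall i, i \in I -> H i x) <-> c I = false).

Definition cjoin (n : nat) (c1 c2 : configuration n) : configuration n :=
  fun I => c1 I || c2 I.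

Section Prod.
Variables G1 G2 : group.
Definition pmul (x y : G1 * G2) : G1 * G2 := (gmul x.1 y.1, gmul x.2 y.2).
Definition pinv (x : G1 * G2) : G1 * G2 := (ginv x.1, ginv x.2).
Definition pone : G1 * G2 := (gone G1, gone G2).
Lemma pmulA x y z : pmul x (pmul y z) = pmul (pmul x y) z.
Proof. by rewrite /pmul /= !gmulA. Qed.
Lemma pmul1l x : pmul pone x = x.
Proof. by case: x => a b; rewrite /pmul /= !gmul1l. Qed.
Lemma pmul1r x : pmul x pone = x.
Proof. by case: x => a b; rewrite /pmul /= !gmul1r. Qed.
Lemma pmulVl x : pmul (pinv x) x = pone.
Proof. by rewrite /pmul /= !gmulVl. Qed.
Lemma pmulVr x : pmul x (pinv x) = pone.
Proof. by rewrite /pmul /= !gmulVr. Qed.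
Definition prod_group : group :=
  @Group (G1 * G2)%type pmul pinv pone pmulA pmul1l pmul1r pmulVl pmulVr.
End Prod.

(* Main.v *)
Require Import Defs.
From mathcomp Require Import all_boot.
From Stdlib Require Import List.
Set Implicit Arguments.

Section Aux.
Variables G1 G2 : group.

Lemma gen_sub (G : group) (K : G -> Prop) (S : list G) :
  is_subgroup K -> (forall s, List.In s S -> K s) ->
  forall x, generated S x -> K x.
Proof.
move=> [K1 [KM KV]] HS x; elim=> //; auto.
Qed.

Lemma gen_fst (S : list (prod_group G1 G2)) (p : prod_group G1 G2) :
  generated S p -> generated (List.map fst S) p.1.
Proof.
elim=> [x Hx| |x y _ IH1 _ IH2|x _ IH].
- by apply: gen_in; apply: List.in_map.
- exact: gen_one.
- exact: gen_mul.
- exact: gen_inv.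
Qed.

Lemma gen_snd (S : list (prod_group G1 G2)) (p : prod_group G1 G2) :
  generated S p -> generated (List.map snd S) p.2.
Proof.
elim=> [x Hx| |x y _ IH1 _ IH2|x _ IH].
- by apply: gen_in; apply: List.in_map.
- exact: gen_one.
- exact: gen_mul.
- exact: gen_inv.
Qed.

Lemma gen_l (S : list G1) (a : G1) :
  generated S a ->
  generated (List.map (fun x => (x, gone G2) : prod_group G1 G2) S) (a, gone G2).
Proof.
elim=> [x Hx| |x y _ IH1 _ IH2|x _ IH].
- by apply: gen_in; apply: (List.in_map (fun x => (x, gone G2) : prod_group G1 G2)).
- exact: (gen_one _ : generated _ (gone (prod_group G1 G2))).
- have := gen_mul IH1 IH2. rewrite [gmul _ _]/= /pmul /= gmul1l. exact.
- have := gen_inv IH. rewrite [ginv _]/= /pinv /=.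
  have -> : ginv (gone G2) = gone G2 by rewrite -{2}(gmulVl (gone G2)) gmul1r.
  exact.
Qed.

Lemma gen_r (S : list G2) (a : G2) :
  generated S a ->
  generated (List.map (fun x => (gone G1, x) : prod_group G1 G2) S) (gone G1, a).
Proof.
elim=> [x Hx| |x y _ IH1 _ IH2|x _ IH].
- by apply: gen_in; apply: (List.in_map (fun x => (gone G1, x) : prod_group G1 G2)).
- exact: (gen_one _ : generated _ (gone (prod_group G1 G2))).
- have := gen_mul IH1 IH2. rewrite [gmul _ _]/= /pmul /= gmul1l. exact.
- have := gen_inv IH. rewrite [ginv _]/= /pinv /=.
  have -> : ginv (gone G1) = gone G1 by rewrite -{2}(gmulVl (gone G1)) gmul1r.
  exact.
Qed.

Lemma gen_mono (G : group) (S T : list G) x :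
  (forall s, List.In s S -> List.In s T) -> generated S x -> generated T x.
Proof.
move=> ST; elim=> *; [apply: gen_in; auto|apply: gen_one|exact: gen_mul|exact: gen_inv].
Qed.

Lemma fin_gen_prod (K1 : G1 -> Prop) (K2 : G2 -> Prop) :
  is_subgroup K1 -> is_subgroup K2 ->
  (fin_gen (fun p : prod_group G1 G2 => K1 p.1 /\ K2 p.2) <->
   fin_gen K1 /\ fin_gen K2).
Proof.
move=> sK1 sK2; have sK1' := sK1; have sK2' := sK2.
case: sK1' => [K11 [K1M K1V]]; case: sK2' => [K21 [K2M K2V]].
have sK : is_subgroup (fun p : prod_group G1 G2 => K1 p.1 /\ K2 p.2).
  split; first by split.
  split; first by move=> x y [? ?] [? ?]; split; [apply: K1M|apply: K2M].
  by move=> x [? ?]; split; [apply: K1V|apply: K2V].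
split.
- move=> [S HS]; split.
  + exists (List.map fst S) => x; split.
    * move=> Kx; have : generated S ((x, gone G2) : prod_group G1 G2).
        by apply/HS.
      by move/gen_fst.
    * move=> gx; apply: (@gen_sub _ _ _ sK1 _ _ gx) => s /List.in_map_iff [p [<- Hp]].
      by have [] := proj2 (HS p) (@gen_in (prod_group G1 G2) S p Hp).
  + exists (List.map snd S) => x; split.
    * move=> Kx; have : generated S ((gone G1, x) : prod_group G1 G2).
        by apply/HS.
      by move/gen_snd.
    * move=> gx; apply: (@gen_sub _ _ _ sK2 _ _ gx) => s /List.in_map_iff [p [<- Hp]].
      by have [] := proj2 (HS p) (@gen_in (prod_group G1 G2) S p Hp).
- move=> [[S1 H1] [S2 H2]].
  exists (List.map (fun x => (x, gone G2) : prod_group G1 G2) S1 ++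
          List.map (fun x => (gone G1, x) : prod_group G1 G2) S2).
  case=> a b; split.
  + move=> [/H1 ga /H2 gb].
    have -> : ((a, b) : prod_group G1 G2) =
              gmul ((a, gone G2) : prod_group G1 G2) (gone G1, b).
      by rewrite /= /pmul /= gmul1l gmul1r.
    apply: gen_mul.
    * apply: gen_mono (gen_l ga) => s Hs; apply: List.in_or_app; by left.
    * apply: gen_mono (gen_r gb) => s Hs; apply: List.in_or_app; by right.
  + move=> g; apply: (@gen_sub _ _ _ sK _ _ g) => s Hs.
    case: (List.in_app_or _ _ _ Hs) => /List.in_map_iff [x [<- Hx]] /=.
    * by split => //; apply/H1; apply: gen_in.
    * by split => //; apply/H2; apply: gen_in.
Qed.

End Aux.

Lemma fin_gen_ext (G : group) (P Q : G -> Prop) :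
  (forall x, P x <-> Q x) -> fin_gen P -> fin_gen Q.
Proof. move=> PQ [S HS]; exists S => x; rewrite -HS; by split; apply PQ. Qed.

Lemma inter_sub (n : nat) (G : group) (H : 'I_n -> G -> Prop) (I : {set 'I_n}) :
  (forall i, is_subgroup (H i)) -> is_subgroup (fun x => forall i, i \in I -> H i x).
Proof.
move=> sH; split; first by move=> i _; case: (sH i).
split.
- by move=> x y Hx Hy i Hi; case: (sH i) => _ [M _]; apply: M; auto.
- by move=> x Hx i Hi; case: (sH i) => _ [_ V]; apply: V; auto.
Qed.

Theorem lemma2p7 (n : nat) (c1 c2 : configuration n) (G1 G2 : group) :
  1 <= n -> realisable c1 G1 -> realisable c2 G2 ->
  realisable (cjoin c1 c2) (prod_group G1 G2).
Proof.
move=> _ [H1 [sH1 R1]] [H2 [sH2 R2]].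
exists (fun i (p : prod_group G1 G2) => H1 i p.1 /\ H2 i p.2); split.
- move=> i; case: (sH1 i) => [a [b c]]; case: (sH2 i) => [d [e f]].
  split; first by split.
  split; first by move=> x y [? ?] [? ?]; split; [apply: b|apply: e].
  by move=> x [? ?]; split; [apply: c|apply: f].
- move=> I I0.
  have E : forall p : prod_group G1 G2,
      (forall i, i \in I -> H1 i p.1 /\ H2 i p.2) <->
      ((forall i, i \in I -> H1 i p.1) /\ (forall i, i \in I -> H2 i p.2)).
    move=> p; split; first by move=> h; split => i Hi; case: (h i Hi).
    by move=> [h1 h2] i Hi; split; auto.
  rewrite /cjoin; split.
  + move=> /(@fin_gen_ext _ _ _ E).
    move=> /(fin_gen_prod (@inter_sub _ _ _ I sH1) (@inter_sub _ _ _ I sH2)) [/(R1 I I0) -> /(R2 I I0) ->] //.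
  + move=> /norP [/negbTE /(R1 I I0) f1 /negbTE /(R2 I I0) f2].
    apply: (fin_gen_ext (P := fun p : prod_group G1 G2 =>
       (forall i, i \in I -> H1 i p.1) /\ (forall i, i \in I -> H2 i p.2))).
      by move=> p; split; apply E.
    by apply/(fin_gen_prod (@inter_sub _ _ _ I sH1) (@inter_sub _ _ _ I sH2)).
Qed.
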